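(* If $M$ is a finite monoid, then the poset $\mathscr{II}(M)$ of two-sided idempotent ideals of $M$, ordered by inclusion, is a distributive lattice, with join $I\vee J=I\cup J$ and meet $I\wedge J=\bigcup_e MeM$ ($e$ ranging over idempotents in $I\cap J$); i.e. $I\wedge(J\cup K)=(I\wedge J)\cup(I\wedge K)$ for all $I,J,K\in\mathscr{II}(M)$.
   Context: A two-sided ideal $I$ (possibly empty) is idempotent if $I=I^2=\{xy\mid x,y\in I\}$. *)

(* Defs.v *)
From mathcomp Require Import all_boot.
Set Implicit Arguments. Unset Strict Implicit. Unset Printing Implicit Defensive.

Definition is_monoid (T : Type) (mul : T -> T -> T) (one : T) : Prop :=
  [/\ associative mul, left_id one mul & right_id one mul].

Section Ideals.
Variables (T : finType) (mul : T -> T -> T).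

(* two-sided ideal (possibly empty) *)
Definition two_sided_ideal (I : {set T}) : Prop :=
  forall x m, x \in I -> mul m x \in I /\ mul x m \in I.

Definition set_square (I : {set T}) : {set T} :=
  [set mul x y | x in I, y in I].

Definition idempotent_ideal (I : {set T}) : Prop :=
  two_sided_ideal I /\ I = set_square I.

Definition principal_ideal (e : T) : {set T} :=
  [set mul (mul m e) n | m in T, n in T].

Definition ii_meet (I J : {set T}) : {set T} :=
  \bigcup_(e in I :&: J | mul e e == e) principal_ideal e.

End Ideals.

(* Main.v *)
Require Import Defs.
From mathcomp Require Import all_boot.
From mathcomp Require Import zify.

Lemma pigeon (T : finType) (f : nat -> T) : exists i j, i < j /\ f i = f j.
Proof.
pose g := fun k : 'I_(#|T|.+1) => f k.
case: (boolP (injectiveb g)) => [/injectiveP inj | /injectivePn [x [y nxy eq]]].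
  by have := leq_card _ inj; rewrite card_ord ltnn.
case: (ltngtP x y) => [lt|gt|e].
- by exists x, y.
- by exists y, x.
- by move: nxy; rewrite -val_eqE /= e eqxx.
Qed.

Lemma sub_ideal (T : finType) (mul : T -> T -> T) (I : {set T}) :
  two_sided_ideal mul I -> set_square mul I \subset I.
Proof.
move=> Hi; apply/subsetP => z /imset2P [x y xI yI ->].
by case: (Hi x y xI).
Qed.

Lemma idem_power (T : finType) (mul : T -> T -> T) (one : T) (I : {set T}) s :
  is_monoid mul one -> two_sided_ideal mul I -> s \in I ->
  exists e, [/\ e \in I, mul e e = e & forall y, y = mul y s -> y = mul y e].
Proof.
case=> mA m1 m2 Hi sI.
pose pw n := iter n (mul s) s.
have pwD : forall a b, pw (a + b).+1 = mul (pw a) (pw b).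
  elim=> [|a IH] b; first by [].
  rewrite addSn. change (mul s (pw (a + b).+1) = mul (mul s (pw a)) (pw b)). by rewrite IH mA.
have pwI : forall n, pw n \in I.
  elim=> [|n IH] //=. by case: (Hi _ s IH).
have pwR : forall y n, y = mul y s -> y = mul y (pw n).
  move=> y; elim=> [|n IH] //= ys. by rewrite mA -ys -IH.
have [i [j [lt eq]]] := pigeon _ pw.
set q := j - i.
have qS : forall m, i <= m -> pw (m + q) = pw m.
  move=> m im.
  case: (posnP (m - i)) => [h|h].
    have -> : m = i by lia.
    by have -> : i + q = j by lia.
  have -> : m + q = (j + (m - i).-1).+1 by lia.
  rewrite pwD -eq -pwD; congr pw; lia.
have qT : forall t m, i <= m -> pw (m + t * q) = pw m.
  elim=> [|t IH] m im; first by rewrite mul0n addn0.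
  by rewrite mulSn addnA IH ?qS //; lia.
exists (pw (i * q + q - 1)); split => //.
  rewrite -pwD.
  have -> : ((i * q + q - 1) + (i * q + q - 1)).+1 = (i * q + q - 1) + i.+1 * q.
    rewrite mulSn; nia.
  by rewrite qT //; nia.
by move=> y; apply: pwR.
Qed.

Lemma key (T : finType) (mul : T -> T -> T) (one : T) (I : {set T}) x :
  is_monoid mul one -> idempotent_ideal mul I -> x \in I ->
  exists e, [/\ e \in I, mul e e = e & x \in principal_ideal mul e].
Proof.
move=> HM; case: (HM) => mA m1 m2 [Hi Hsq] xI.
pose P a := fun p : T * T => (p.1 \in I) && (p.2 \in I) && (a == mul p.1 p.2).
have stepP : forall a, a \in I -> exists p, P a p.
  move=> a; rewrite Hsq => /imset2P [u v uI vI ->].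
  by exists (u, v); rewrite /P /= uI vI eqxx.
pose step a := odflt (a, one) [pick p | P a p].
have stepS : forall a, a \in I -> P a (step a).
  move=> a /stepP [p Pp]; rewrite /step; case: pickP => [p' //|/(_ p)].
  by rewrite Pp.
pose A := fun k => iter k (fun a => (step a).1) x.
have AI : forall k, A k \in I.
  elim=> [|k IH] //=. by case/andP: (stepS _ IH) => /andP [].
have Astep : forall k, A k = mul (A k.+1) (step (A k)).2.
  move=> k; case/andP: (stepS _ (AI k)) => _ /eqP {1}->; by [].
have Bsuf : forall k, exists c, x = mul (A k) c.
  elim=> [|k [c Hc]]; first by exists one; rewrite m2.
  by exists (mul (step (A k)).2 c); rewrite mA -Astep.
have Ains : forall i d, exists s, s \in I /\ A i = mul (A (i + d).+1) s.
  move=> i; elim=> [|d [s [sI Hs]]].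
    exists (step (A i)).2; rewrite addn0; split; last exact: Astep.
    by case/andP: (stepS _ (AI i)) => /andP [].
  have bI : (step (A (i + d).+1)).2 \in I.
    by case/andP: (stepS _ (AI (i+d).+1)) => /andP [].
  exists (mul (step (A (i + d).+1)).2 s); split; first by case: (Hi _ s bI).
  by rewrite Hs mA addnS -Astep.
have [i [j [lt eq]]] := pigeon _ A.
have [s [sI Hs]] := Ains i (j - i).-1.
have ej : (i + (j - i).-1).+1 = j by lia.
rewrite ej in Hs.
rewrite -eq in Hs.
have [e [eI ee He]] := @idem_power _ _ _ _ _ HM Hi sI.
exists e; split => //.
have [c Hc] := Bsuf i.
apply/imset2P; exists (A i) c => //.
by rewrite Hc {1}(He _ Hs).
Qed.

Theorem corollary4p9 (T : finType) (mul : T -> T -> T) (one : T) :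
  is_monoid mul one ->
  forall I J K : {set T},
    idempotent_ideal mul I -> idempotent_ideal mul J -> idempotent_ideal mul K ->
    (* join: I :|: J is an idempotent ideal, the least upper bound in II(M) *)
    (idempotent_ideal mul (I :|: J) /\
     (I \subset I :|: J) /\ (J \subset I :|: J) /\
     (forall L : {set T}, idempotent_ideal mul L ->
        I \subset L -> J \subset L -> I :|: J \subset L)) /\
    (* meet: the union of M e M over idempotents e of I :&: J is an idempotent
       ideal, the greatest lower bound in II(M) *)
    (idempotent_ideal mul (ii_meet mul I J) /\
     (ii_meet mul I J \subset I) /\ (ii_meet mul I J \subset J) /\
     (forall L : {set T}, idempotent_ideal mul L ->
        L \subset I -> L \subset J -> L \subset ii_meet mul I J)) /\
    (* distributivity *)
    ii_meet mul I (J :|: K) = ii_meet mul I J :|: ii_meet mul I K.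
Proof.
move=> HM; case: (HM) => mA m1 m2 I J K HI HJ HK.
have HII := HI; have HJJ := HJ.
case: HI => HiI HsI; case: HJ => HiJ HsJ.
have prI : forall e (L : {set T}), two_sided_ideal mul L -> e \in L ->
    principal_ideal mul e \subset L.
  move=> e L HL eL; apply/subsetP => z /imset2P [m n _ _ ->].
  have [h _] := HL e m eL; by case: (HL _ n h).
have meet_ideal : forall I J, two_sided_ideal mul (ii_meet mul I J).
  move=> I' J' z m /bigcupP [e He] /imset2P [a b _ _ ->].
  split; apply/bigcupP; exists e => //; apply/imset2P.
  - by exists (mul m a) b; rewrite // !mA.
  - by exists a (mul b m); rewrite // -!mA.
split; [|split].
- split; [split|].
  + move=> x m; case/setUP => xin.
    * by case: (HiI x m xin) => h1 h2; rewrite !inE h1 h2.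
    * by case: (HiJ x m xin) => h1 h2; rewrite !inE h1 h2 !orbT.
  + apply/eqP; rewrite eqEsubset; apply/andP; split; last first.
      apply: sub_ideal => x m; case/setUP => xin.
      * by case: (HiI x m xin) => h1 h2; rewrite !inE h1 h2.
      * by case: (HiJ x m xin) => h1 h2; rewrite !inE h1 h2 !orbT.
    apply/subsetP => x; case/setUP => xin.
    * have : x \in set_square mul I by rewrite -HsI.
      move=> /imset2P [a b aI bI ->].
      by apply/imset2P; exists a b; rewrite // inE ?aI ?bI.
    * have : x \in set_square mul J by rewrite -HsJ.
      move=> /imset2P [a b aI bI ->].
      by apply/imset2P; exists a b; rewrite // inE ?aI ?bI orbT.
  + split; first exact: subsetUl.
    split; first exact: subsetUr.
    by move=> L _ h1 h2; rewrite subUset h1 h2.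
- split; [split|].
  + exact: meet_ideal.
  + apply/eqP; rewrite eqEsubset; apply/andP; split; last first.
      exact: sub_ideal (meet_ideal I J).
    apply/subsetP => x /bigcupP [e He] /imset2P [a b _ _ ->].
    case/andP: (He) => _ /eqP ee.
    apply/imset2P; exists (mul a e) (mul e b).
    * apply/bigcupP; exists e => //.
      by apply/imset2P; exists a one; rewrite // m2.
    * apply/bigcupP; exists e => //.
      by apply/imset2P; exists one b; rewrite // m1.
    * by rewrite [RHS]mA -(mA a e e) ee.
  + split.
      apply/subsetP => x /bigcupP [e He] xe.
      case/andP: He; rewrite inE => /andP [eI _] _.
      exact: (subsetP (prI e I HiI eI)).
    split.
      apply/subsetP => x /bigcupP [e He] xe.
      case/andP: He; rewrite inE => /andP [_ eJ] _.
      exact: (subsetP (prI e J HiJ eJ)).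
    move=> L HL LI LJ; apply/subsetP => x xL.
    have [e [eL ee xe]] := @key _ _ _ _ _ HM HL xL.
    apply/bigcupP; exists e => //.
    by rewrite inE (subsetP LI _ eL) (subsetP LJ _ eL) ee eqxx.
- apply/eqP; rewrite eqEsubset; apply/andP; split; apply/subsetP => x.
  + case/bigcupP => e; rewrite !inE => /andP [/andP [eI /orP [eJ|eK]] ee] xe.
    * apply/orP; left; apply/bigcupP; exists e => //.
      by rewrite !inE eI eJ ee.
    * apply/orP; right; apply/bigcupP; exists e => //.
      by rewrite !inE eI eK ee.
  + case/setUP => /bigcupP [e]; rewrite !inE => /andP [/andP [eI eX] ee] xe;
      apply/bigcupP; exists e => //; by rewrite !inE eI eX ee ?orbT.
Qed.
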